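(* Let $E$ be a countable directed graph satisfying the standing assumptions (1)–(4) of the context, let $S=V_{x_E}$, let $\mathcal S$ be the set of sources of $E_S$, and let $\beta<0$. Then the orbit $[x_E]$ is $\beta$-summable if and only if $$\lim_{n\to\infty}\sum_{\mu\in\mathcal SE^*v_n}e^{\beta(n-|\mu|)}<\infty,$$ where $\mathcal SE^*v_n=\{\mu\in E^*:s(\mu)\in\mathcal S,\ r(\mu)=v_n\}$ (the sequence is eventually nondecreasing, so the limit exists in $[0,\infty]$).
   Context: Directed graph conventions: paths $\mu=\mu_0\cdots\mu_{n-1}$ with $r(\mu_i)=s(\mu_{i+1})$, $|\mu|$ the length, vertices as paths of length $0$, $vE^*w$ paths from $v$ to $w$, $E^\infty$ infinite paths, $vE^1$ edges with source $v$. A source is a vertex receiving no edges. For $S\subseteq E^0$, $E_S$ has vertex set $S$ and edges with source and range in $S$. For $x=x_0x_1\cdots\in E^\infty$: $V_x=\{v\in E^0: vE^*s(x_n)\neq\emptyset\text{ for some }n\}$, $W_x=\{s(x_j):j\ge0\}$. Standing assumptions: (1) there is a fixed $x_E=x_0x_1\cdots\in E^\infty$ with $v_0:=s(x_0)$ a source; write $v_i=s(x_i)$; (2) with $S=V_{x_E}$, $|vE_S^1|<\infty$ for all $v\in S$; (3) $E_S$ has no nontrivial cycles; (4) $V_{x_E}\setminus W_{x_E}$ is finite. The orbit of $x\in E^\infty$ is $[x]=\{y\in E^\infty:\exists n,m\ge0,\ y_{i+m}=x_{i+n}\ \forall i\}$. If $x$ is not eventually periodic, for $y\in[x]$ written $y=\mu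 z$, $x=\nu z$ ($\mu,\nu$ finite, $z\in E^\infty$) set $l_x(y)=e^{-(|\mu|-|\nu|)}$; $[x]$ is $\beta$-summable if $x$ is not eventually periodic and $\sum_{y\in[x]}l_x(y)^\beta<\infty$. *)

(* Defs.v *)
From mathcomp Require Import all_boot all_order all_algebra.
From mathcomp Require Import all_classical all_reals all_analysis.
Set Implicit Arguments. Unset Strict Implicit. Unset Printing Implicit Defensive.
Import Order.TTheory GRing.Theory Num.Theory.
Local Open Scope classical_set_scope.
Local Open Scope ring_scope.

(* A countable directed graph E = (E^0, E^1, s, r): vertices V, edges E,
   source map s and range map r (an edge e goes from s e to r e). *)

(* Finite paths: a start vertex together with a list of edges
   mu_0 ... mu_{n-1} with r(mu_i) = s(mu_{i+1}); a vertex is a path of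
   length 0 (empty edge list). *)
Definition fpath (V E : countType) := (V * seq E)%type.

Definition fp_valid (V E : countType) (s r : E -> V) (p : fpath V E) : bool :=
  if p.2 is e :: es then (s e == p.1) && path (fun a b => r a == s b) e es
  else true.

Definition fp_len (V E : countType) (p : fpath V E) : nat := size p.2.
Definition fp_src (V E : countType) (p : fpath V E) : V := p.1.
Definition fp_rng (V E : countType) (r : E -> V) (p : fpath V E) : V :=
  last p.1 (map r p.2).

Definition paths_from_to (V E : countType) (s r : E -> V) (v w : V)
  : set (fpath V E) :=
  [set p | fp_valid s r p /\ fp_src p = v /\ fp_rng r p = w].

Definition inf_path (V E : countType) (s r : E -> V) (x : nat -> E) : Prop :=
  forall i, r (x i) = s (x i.+1).

Definition Vx (V E : countType) (s r : E -> V) (x : nat -> E) : set V :=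
  [set v | exists n, paths_from_to s r v (s (x n)) !=set0].
Definition Wx (V E : countType) (s : E -> V) (x : nat -> E) : set V :=
  [set v | exists j, v = s (x j)].

Definition is_source (V E : countType) (r : E -> V) (v : V) : Prop :=
  forall e : E, r e <> v.

Definition edges_in (V E : countType) (s r : E -> V) (S : set V) : set E :=
  [set e | S (s e) /\ S (r e)].

Definition sources_of_sub (V E : countType) (s r : E -> V) (S : set V) : set V :=
  [set v | S v /\ forall e, edges_in s r S e -> r e <> v].

Definition no_nontrivial_cycles (V E : countType) (s r : E -> V) (S : set V)
  : Prop :=
  forall p : fpath V E, fp_valid s r p -> (0 < fp_len p)%N ->
    (forall e, e \in p.2 -> edges_in s r S e) -> fp_rng r p <> fp_src p.

Definition eventually_periodic (E : Type) (x : nat -> E) : Prop :=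
  exists n p, (0 < p)%N /\ forall i, (n <= i)%N -> x (i + p)%N = x i.

Definition orbit (V E : countType) (s r : E -> V) (x : nat -> E)
  : set (nat -> E) :=
  [set y | inf_path s r y /\ exists n m, forall i, y (i + m)%N = x (i + n)%N].

(* l_x(y) = e^{-(|mu| - |nu|)} where y = mu z, x = nu z (|mu| = m, |nu| = n);
   the pair (n, m) is chosen (well defined when x is not eventually periodic) *)
Definition lag_pair (E : countType) (x y : nat -> E) : nat * nat :=
  xget (0, 0)%N [set nm | forall i, y (i + nm.2)%N = x (i + nm.1)%N].

Definition lx (R : realType) (E : countType) (x y : nat -> E) : R :=
  expR (- ((lag_pair x y).2%:R - (lag_pair x y).1%:R)).

Definition beta_summable (R : realType) (V E : countType) (s r : E -> V)
  (x : nat -> E) (beta : R) : Prop :=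
  ~ eventually_periodic x /\
  (\esum_(y in orbit s r x) ((lx R x y) `^ beta)%:E < +oo)%E.

Definition source_sum (R : realType) (V E : countType) (s r : E -> V)
  (x : nat -> E) (beta : R) (n : nat) : \bar R :=
  \esum_(mu in [set mu : fpath V E | fp_valid s r mu /\
                    sources_of_sub s r (Vx s r x) (fp_src mu) /\
                    fp_rng r mu = s (x n)])
     (expR (beta * (n%:R - (fp_len mu)%:R)))%:E.

(* Main.v *)
Require Import Defs.
From mathcomp Require Import all_boot all_order all_algebra.
From mathcomp Require Import all_classical all_reals all_analysis.
From mathcomp Require Import zify ring lra.
Import Order.TTheory GRing.Theory Num.Theory.
Local Open Scope classical_set_scope.
Local Open Scope ring_scope.
Set Implicit Arguments. Unset Strict Implicit. Unset Printing Implicit Defensive.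

Section Paths.
Variables (V E : countType) (s r : E -> V).

Definition pvd (u : V) (es : seq E) := fp_valid s r (u, es).
Definition prd (u : V) (es : seq E) := last u (map r es).

Lemma fpvE u es : fp_valid s r (u, es) = pvd u es. Proof. by []. Qed.
Lemma fprE u es : fp_rng r (u, es) = prd u es. Proof. by []. Qed.

Lemma pv_nil u : pvd u [::]. Proof. by []. Qed.

Lemma pv_cons u e es : pvd u (e :: es) = (s e == u) && pvd (r e) es.
Proof.
rewrite /pvd /fp_valid /=; case: es => [|f es] /=; first by rewrite andbT.
by rewrite (eq_sym (s f)).
Qed.

Lemma pr_cons u e es : prd u (e :: es) = prd (r e) es. Proof. by []. Qed.

Lemma pv_cat u a b : pvd u (a ++ b) = pvd u a && pvd (prd u a) b.
Proof.
elim: a u => [|e a IH] u //=.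
by rewrite !pv_cons IH andbA pr_cons.
Qed.

Lemma pr_cat u a b : prd u (a ++ b) = prd (prd u a) b.
Proof. by rewrite /prd map_cat last_cat. Qed.

Lemma pv_rcons u a e : pvd u (rcons a e) = pvd u a && (s e == prd u a).
Proof. by rewrite -cats1 pv_cat pv_cons andbT. Qed.

Lemma pr_rcons u a e : prd u (rcons a e) = r e.
Proof. by rewrite /prd map_rcons last_rcons. Qed.

Lemma mem_vl u es z : z \in u :: map r es -> exists a b, es = a ++ b /\ z = prd u a.
Proof.
rewrite inE => /orP[/eqP->|]; first by exists [::], es.
case/mapP => f fin ->; case/splitPr: fin => a b.
by exists (rcons a f), b; rewrite cat_rcons pr_rcons.
Qed.

Lemma seg_valid (y : nat -> E) (hy : inf_path s r y) n k :
  pvd (s (y n)) (map y (iota n k)) /\ prd (s (y n)) (map y (iota n k)) = s (y (n + k)%N).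
Proof.
elim: k n => [|k IH] n; first by rewrite addn0.
rewrite /= pv_cons pr_cons eqxx /= hy; have [h1 h2] := IH n.+1.
by rewrite h1 h2 addSnnS.
Qed.

End Paths.


Section Graph.
Variables (V E : countType) (s r : E -> V) (x : nat -> E).
Hypothesis hx : inf_path s r x.
Hypothesis h3 : no_nontrivial_cycles s r (Vx s r x).
Local Notation S := (Vx s r x).
Local Notation pv := (pvd s r).
Local Notation pr := (prd r).

Lemma Sv i : S (s (x i)).
Proof. by exists i, (s (x i), [::]). Qed.

Lemma edge_x_in i : edges_in s r S (x i).
Proof. by split; [apply: Sv| rewrite hx; apply: Sv]. Qed.

Lemma S_back u es : pv u es -> S (pr u es) -> S u.
Proof.
move=> hv [n [[w fs] [hv' [/= hw hrng]]]].
exists n, (u, es ++ fs); split; last split => //.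
  by change (pv u (es ++ fs)); rewrite pv_cat hv -hw; exact: hv'.
by change (pr u (es ++ fs) = s (x n)); rewrite pr_cat -hw; exact: hrng.
Qed.

Lemma edges_S u es : pv u es -> S (pr u es) -> forall e, e \in es -> edges_in s r S e.
Proof.
move=> hv hS e ein; move: hv hS; case/splitPr: ein => a b hv hS.
move: hv; rewrite pv_cat pv_cons => /and3P[_ /eqP hse hb].
rewrite pr_cat pr_cons in hS.
split; last exact: S_back hb hS.
apply: (@S_back (s e) [:: e & b]); first by rewrite pv_cons eqxx.
by rewrite pr_cons.
Qed.

Lemma vl_uniq u es : pv u es -> (forall e, e \in es -> edges_in s r S e) ->
  uniq (u :: map r es).
Proof.
elim: es u => [|e es IH] u // hv hE.
change (uniq (u :: r e :: map r es)); rewrite cons_uniq.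
have hv0 := hv; move: hv; rewrite pv_cons => /andP[/eqP hse hv].
rewrite IH ?andbT //; last by move=> f fin; apply: hE; rewrite inE fin orbT.
apply/negP => hu.
have : u \in map r (e :: es) by [].
case/mapP => f fin hf; move: hv0 hE; case/splitPr: fin => a b hv0 hE.
apply: (h3 (p := (u, rcons a f))) => //.
- rewrite fpvE pv_rcons.
  by move: hv0; rewrite pv_cat pv_cons => /and3P[-> -> _].
- by rewrite /fp_len size_rcons.
- move=> g /=; rewrite mem_rcons => gin; apply: hE.
  by rewrite mem_cat; move: gin; rewrite inE => /orP[/eqP->|->]; rewrite ?inE ?eqxx ?orbT.
- by rewrite fprE pr_rcons.
Qed.

Lemma vl_W u es N j : pv u es -> pr u es = s (x N) ->
  s (x j) \in u :: map r es -> (j <= N)%N.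
Proof.
move=> hv hr /mem_vl [a [b [hes hz]]].
rewrite leqNgt; apply/negP => hNj.
have hvb : pv (pr u a) b by move: hv; rewrite hes pv_cat => /andP[].
have hrb : pr (pr u a) b = s (x N) by rewrite -pr_cat -hes.
have [hsv hsr] := seg_valid hx N (j - N).
have hES : forall e, e \in es -> edges_in s r S e.
  by apply: (edges_S hv); rewrite hr; apply: Sv.
apply: (h3 (p := (s (x j), b ++ map x (iota N (j - N))))).
- rewrite fpvE pv_cat hz hvb /= hrb hsv //.
- by rewrite /fp_len size_cat size_map size_iota addn_gt0 subn_gt0 hNj orbT.
- move=> e /=; rewrite mem_cat => /orP[eb|].
    by apply: hES; rewrite hes mem_cat eb orbT.
  by case/mapP => i _ ->; apply: edge_x_in.
- rewrite fprE pr_cat hz hrb hsr /=.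
  by rewrite subnKC // ltnW.
Qed.

Lemma x_np : ~ eventually_periodic x.
Proof.
case=> n [p [hp hper]].
have [hsv hsr] := seg_valid hx n p.
apply: (h3 (p := (s (x n), map x (iota n p)))) => //.
- by rewrite /fp_len /= size_map size_iota.
- by move=> e /= /mapP [i _ ->]; apply: edge_x_in.
- by rewrite fprE hsr hper.
Qed.

Hypothesis h4 : finite_set (S `\` Wx s x).

Lemma len_bound : exists K, forall u es N, pv u es -> pr u es = s (x N) ->
  (size es <= K + N)%N.
Proof.
have [sF hsF] := (finite_seqP _).1 h4.
exists (size sF) => u es N hv hr.
have hES : forall e, e \in es -> edges_in s r S e.
  by apply: (edges_S hv); rewrite hr; apply: Sv.
suff hsub : {subset (u :: map r es) <= sF ++ map (fun j => s (x j)) (iota 0 N.+1)}.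
  have := uniq_leq_size (vl_uniq hv hES) hsub.
  by rewrite size_cat size_map size_iota /= size_map addnS ltnS.
move=> z hz.
have [a [b [hes hza]]] := mem_vl hz.
have hSz : S z.
  apply: (@S_back z b); first by move: hv; rewrite hes pv_cat hza => /andP[].
  by rewrite hza -pr_cat -hes hr; apply: Sv.
have [[j hj]|hW] := pselect (Wx s x z).
  rewrite mem_cat; apply/orP; right; apply/mapP; exists j => //.
  by rewrite mem_iota /= ltnS (vl_W hv hr) // -hj.
rewrite mem_cat; apply/orP; left.
have : (S `\` Wx s x) z by [].
by rewrite hsF.
Qed.

Lemma src_ext u es N : pv u es -> pr u es = s (x N) ->
  exists nu : Defs.fpath V E, fp_valid s r nu /\ sources_of_sub s r S (fp_src nu) /\
    fp_rng r nu = s (x N) /\ exists pre, nu.2 = pre ++ es.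
Proof.
move=> hv hr; have [K hK] := len_bound.
suff : forall d u' es', pv u' es' -> pr u' es' = s (x N) ->
    (exists pre, es' = pre ++ es) -> (K + N < size es' + d)%N ->
  exists nu : Defs.fpath V E, fp_valid s r nu /\ sources_of_sub s r S (fp_src nu) /\
    fp_rng r nu = s (x N) /\ exists pre, nu.2 = pre ++ es.
  move=> /(_ (K + N).+1 u es hv hr) h; apply: h; first by exists [::].
  by rewrite addnS ltnS leq_addl.
elim=> [|d IH] u' es' hv' hr' hpre hlt.
  by move: hlt; rewrite addn0 ltnNge (hK _ _ _ hv' hr').
have [hsrc|hns] := pselect (sources_of_sub s r S u').
  by exists (u', es').
have hSu : S u' by apply: (S_back hv'); rewrite hr'; apply: Sv.
have : ~ forall e, edges_in s r S e -> r e <> u' by move=> h; apply: hns.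
case/existsNP => e /not_implyP [he /contrapT hre].
apply: (IH (s e) (e :: es')).
- by rewrite pv_cons eqxx hre.
- by rewrite pr_cons hre.
- by case: hpre => pre ->; exists (e :: pre).
- by rewrite /= addSnnS.
Qed.

End Graph.


Lemma lag_unique (E : Type) (x y : nat -> E) n m n' m' : ~ eventually_periodic x ->
  (forall i, y (i + m)%N = x (i + n)%N) -> (forall i, y (i + m')%N = x (i + n')%N) ->
  (m + n' = m' + n)%N.
Proof.
move=> np h h'.
have key : forall i, x (i + (m' + n))%N = x (i + (m + n'))%N.
  move=> i; rewrite addnA -h -addnA (addnC m' m) addnA h' -addnA //.
case: (ltngtP (m' + n) (m + n')) => // hlt; exfalso; apply: np.
- exists (m' + n)%N, (m + n' - (m' + n))%N; split; first by rewrite subn_gt0.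
  move=> i hi; have := key (i - (m' + n))%N.
  have -> : (i - (m' + n) + (m' + n) = i)%N by lia.
  have -> : (i - (m' + n) + (m + n') = i + (m + n' - (m' + n)))%N by lia.
  by move->.
- exists (m + n')%N, (m' + n - (m + n'))%N; split; first by rewrite subn_gt0.
  move=> i hi; have := key (i - (m + n'))%N.
  have -> : (i - (m + n') + (m + n') = i)%N by lia.
  have -> : (i - (m + n') + (m' + n) = i + (m' + n - (m + n')))%N by lia.
  by move->.
Qed.

Lemma lag_val (R : realType) (E : countType) (x y : nat -> E) n m :
  ~ eventually_periodic x -> (forall i, y (i + m)%N = x (i + n)%N) ->
  lx R x y = expR (- (m%:R - n%:R)).
Proof.
move=> np h; rewrite /lx /lag_pair.
have := xgetPex (0,0)%N (ex_intro (fun nm : nat * nat => forall i, y (i + nm.2)%N = x (i + nm.1)%N) (n,m) h).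
set p := xget _ _ => hp.
have e := lag_unique np h hp.
have e' : (m + p.1)%:R = (p.2 + n)%:R :> R by rewrite e.
rewrite !natrD in e'; congr (expR _); lra.
Qed.

Lemma w_val (R : realType) (E : countType) (x y : nat -> E) n m (beta : R) :
  ~ eventually_periodic x -> (forall i, y (i + m)%N = x (i + n)%N) ->
  lx R x y `^ beta = expR (beta * (n%:R - m%:R)).
Proof.
move=> np h; rewrite (lag_val R np h) -expRM; congr expR; ring.
Qed.

Lemma le_sub_seq (R : realType) (T : eqType) (s t : seq T) (F : T -> R) :
  uniq s -> uniq t -> {subset s <= t} -> (forall i, 0 <= F i) ->
  \sum_(i <- s) F i <= \sum_(i <- t) F i.
Proof.
move=> us ut sst F0.
have eq : \sum_(i <- t | i \in s) F i = \sum_(i <- s) F i.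
  rewrite -big_filter; apply: perm_big.
  apply: uniq_perm; [exact: filter_uniq| exact: us|].
  by move=> i; rewrite mem_filter; case: (boolP (i \in s)) => // /sst ->.
rewrite [X in _ <= X](bigID (fun i => i \in s)) /= eq.
by rewrite -[X in X <= _]addr0 lerD2l sumr_ge0.
Qed.

Lemma geom_bound (R : realType) (beta : R) (N K : nat) : beta < 0 ->
  \sum_(k <- iota 0 K.+1) expR (beta * (N%:R - k%:R)) <=
  (1 - expR beta)^-1 * expR (beta * (N%:R - K%:R)).
Proof.
move=> hb; set q := expR beta; set C := (1 - q)^-1.
have hq1 : q < 1 by rewrite expR_lt1.
have hq0 : 0 < q by apply: expR_gt0.
have hC : C * q + 1 = C by rewrite /C; field; lra.
have hC1 : 1 <= C by rewrite /C invf_ge1 ?subr_gt0 //; lra.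
elim: K => [|K IH].
  rewrite (_ : iota 0 1 = [:: 0]%N) // big_seq1 -[X in X <= _]mul1r ler_wpM2r //; exact: expR_ge0.
rewrite (_ : iota 0 K.+2 = iota 0 K.+1 ++ [:: K.+1]); last by rewrite -addn1 iotaD.
rewrite big_cat big_seq1.
set a := expR (beta * (N%:R - K.+1%:R)).
have ha : expR (beta * (N%:R - K%:R)) = a * q.
  by rewrite /a /q -expRD; congr expR; rewrite -addn1 natrD; ring.
rewrite -[X in _ <= X * _]hC mulrDl mul1r lerD2r.
by rewrite ha mulrA in IH; rewrite (le_trans IH) // mulrAC.
Qed.


Lemma esum_sub (R : realType) (T : choiceType) (A B : set T) (a : T -> \bar R) :
  A `<=` B -> (\esum_(i in A) a i <= \esum_(i in B) a i)%E.
Proof.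
move=> AB; apply: ge_ereal_sup => _ [X [finX XA] <-]; apply: esum_ge.
by exists X => //; split => //; exact: subset_trans XA AB.
Qed.

Section Main.
Variables (R : realType) (V E : countType) (s r : E -> V) (x : nat -> E).
Hypothesis hx : inf_path s r x.
Hypothesis h3 : no_nontrivial_cycles s r (Vx s r x).
Hypothesis h4 : finite_set (Vx s r x `\` Wx s x).
Variables (beta : R).
Hypothesis hbeta : beta < 0.
Local Notation S := (Vx s r x).
Local Notation pv := (pvd s r).
Local Notation pr := (prd r).

Definition SP n := [set mu : Defs.fpath V E | fp_valid s r mu /\
                    sources_of_sub s r S (fp_src mu) /\ fp_rng r mu = s (x n)].
Definition tm n (mu : Defs.fpath V E) : \bar R :=
  (expR (beta * (n%:R - (fp_len mu)%:R)))%:E.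

Lemma ssE n : source_sum s r x beta n = \esum_(mu in SP n) tm n mu.
Proof. by []. Qed.

Let np := x_np hx h3.

Lemma f_step n : (source_sum s r x beta n <= source_sum s r x beta n.+1)%E.
Proof.
rewrite !ssE.
pose g := fun mu : Defs.fpath V E => (mu.1, rcons mu.2 (x n)).
rewrite (eq_esum (b := fun mu => tm n.+1 (g mu))); last first.
  move=> [u es] _; rewrite /tm /g /fp_len /= size_rcons; congr (expR _)%:E.
  by rewrite -[n.+1]addn1 -[(size es).+1]addn1 !natrD; ring.
rewrite -(esum_image _ g); last first.
  by move=> [u es] [u' es'] _ _ /= [-> /rcons_inj [->]].
apply: esum_sub => _ [[u es] [hv [hsrc hr]] <-]; split; last split => //.
  by rewrite /g /= fpvE pv_rcons; rewrite fpvE in hv; rewrite hv; rewrite fprE in hr; rewrite hr eqxx.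
by rewrite /g /= fprE pr_rcons hx.
Qed.


Definition emb n (mu : Defs.fpath V E) : nat -> E :=
  fun i => nth (x (i - size mu.2 + n)%N) mu.2 i.

Lemma emb_tail n mu i : emb n mu (i + size mu.2)%N = x (i + n)%N.
Proof. by rewrite /emb nth_default ?leq_addl // addnK. Qed.

Lemma emb_inf n mu : SP n mu -> inf_path s r (emb n mu).
Proof.
case: mu => u es [hv [_ hr]] i; rewrite /emb /=.
rewrite fpvE in hv; rewrite fprE in hr.
case: (ltngtP i.+1 (size es)) => hi.
- rewrite (set_nth_default (x 0%N)) ?(ltnW hi) // (set_nth_default (x 0%N) _ hi).
  case: es hv hi {hr} => [|e es] // hv hi.
  move: hv; rewrite /pvd /fp_valid /= => /andP[_ /(pathP (x 0%N))].
  by move=> /(_ i hi) /eqP.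
- rewrite !nth_default ?(ltnW hi) //.
  have hi' : (size es <= i)%N := hi.
  by rewrite (subSn hi') addSn hx.
- case/lastP: es hv hr hi => [|a e] // hv hr.
  rewrite size_rcons => -[->].
  rewrite nth_rcons ltnn eqxx nth_default ?size_rcons // subnn add0n.
  by rewrite pr_rcons in hr.
Qed.

Lemma emb_orbit n mu : SP n mu -> Defs.orbit s r x (emb n mu).
Proof.
move=> h; split; first exact: emb_inf.
by exists n, (size mu.2) => i; rewrite emb_tail.
Qed.

Lemma emb_w n mu : SP n mu ->
  lx R x (emb n mu) `^ beta = expR (beta * (n%:R - (fp_len mu)%:R)).
Proof. by move=> h; apply: w_val np _ => i; rewrite emb_tail. Qed.

Lemma emb_inj n : set_inj (SP n) (emb n).
Proof.
move=> [u es] [u' es'] /set_mem [hv [_ hr]] /set_mem [hv' [_ hr']] he.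
rewrite fpvE in hv; rewrite fprE in hr; rewrite fpvE in hv'; rewrite fprE in hr'.
have h1 : forall i, emb n (u, es) (i + size es)%N = x (i + n)%N by move=> i; apply: emb_tail.
have h2 : forall i, emb n (u, es) (i + size es')%N = x (i + n)%N.
  by move=> i; rewrite he; apply: emb_tail.
have hsz : size es = size es' by apply/eqP; rewrite -(eqn_add2r n) (lag_unique np h1 h2).
have hes : es = es'.
  apply: (@eq_from_nth _ (x 0%N) es es' hsz) => i hi.
  have := congr1 (fun f => f i) he; rewrite /emb /=.
  have hi' : (i < size es')%N by rewrite -hsz.
  by rewrite (set_nth_default (x 0%N)) // (set_nth_default (x 0%N) _ hi').
subst es'; congr pair.
case: es hv hv' hr hr' {he h1 h2 hsz} => [|e es] hv hv' hr hr'; first by move: hr hr'; rewrite /prd /= => -> ->.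
by move: hv hv'; rewrite !pv_cons => /andP[/eqP <- _] /andP[/eqP <- _].
Qed.

Definition Tsum := \esum_(y in Defs.orbit s r x) (lx R x y `^ beta)%:E.

Lemma f_le_T n : (source_sum s r x beta n <= Tsum)%E.
Proof.
rewrite ssE (eq_esum (b := fun mu => (lx R x (emb n mu) `^ beta)%:E)); last first.
  by move=> mu hmu; rewrite emb_w.
rewrite -(esum_image _ (emb n) (fun y => (lx R x y `^ beta)%:E)); last exact: emb_inj.
by apply: esum_sub => _ [mu hmu <-]; apply: emb_orbit.
Qed.


Lemma core (L : R) : (forall N, source_sum s r x beta N <= L%:E)%E ->
  forall ys : seq (nat -> E), uniq ys -> (forall y, y \in ys -> Defs.orbit s r x y) ->
  \sum_(y <- ys) lx R x y `^ beta <= (1 - expR beta)^-1 * L.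
Proof.
move=> hL ys uys hys.
pose lp y := lag_pair x y.
have hrep : forall y, y \in ys -> forall i, y (i + (lp y).2)%N = x (i + (lp y).1)%N.
  move=> y /hys [_ [n [m h]]].
  exact: (xgetPex (0,0)%N (ex_intro (fun nm : nat * nat => forall i, y (i + nm.2)%N = x (i + nm.1)%N) (n,m) h)).
pose N := (\max_(y <- ys) (lp y).1)%N.
have hN : forall y, y \in ys -> ((lp y).1 <= N)%N.
  by move=> y yin; apply: (@leq_bigmax_seq _ _ xpredT (fun y => (lp y).1)).
pose mN y := ((lp y).2 + (N - (lp y).1))%N.
have hrepN : forall y, y \in ys -> forall i, y (i + mN y)%N = x (i + N)%N.
  move=> y yin i; rewrite /mN (addnC (lp y).2) addnA hrep // -addnA subnK //.
  exact: hN.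
have hw : forall y, y \in ys -> lx R x y `^ beta = expR (beta * (N%:R - (mN y)%:R)).
  by move=> y yin; apply: w_val np _; apply: hrepN.
have hinf : forall y, y \in ys -> inf_path s r y by move=> y /hys [].
pose nuP y (nu : Defs.fpath V E) := fp_valid s r nu /\ sources_of_sub s r S (fp_src nu) /\
    fp_rng r nu = s (x N) /\ exists pre, nu.2 = pre ++ map y (iota 0 (mN y)).
pose nu y := xget (s (x N), [::]) (nuP y).
have hnu : forall y, y \in ys -> nuP y (nu y).
  move=> y yin; apply: xgetPex.
  have [hv hr] := seg_valid (hinf y yin) 0 (mN y).
  apply: (src_ext hx h3 h4 hv).
  by rewrite hr -(add0n (mN y)) hrepN.
pose pp y := (nu y, mN y).
have pinj : {in ys &, injective pp}.
  move=> y y' yin y'in [e1 e2].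
  have [_ [_ [_ [pre hpre]]]] := hnu y yin.
  have [_ [_ [_ [pre' hpre']]]] := hnu y' y'in.
  have hm : map y (iota 0 (mN y)) = map y' (iota 0 (mN y)).
    move: hpre'; rewrite -e1 -e2 hpre => hcat.
    have hs : size pre = size pre'.
      by move/(congr1 size): hcat; rewrite !size_cat !size_map => /addIn.
    by move/eqP: hcat; rewrite eqseq_cat // => /andP[_ /eqP].
  apply: funext => i.
  case: (ltnP i (mN y)) => hi.
    have := congr1 (fun l => nth (x 0%N) l i) hm.
    by rewrite /= !(nth_map 0%N) ?size_iota // nth_iota.
  have -> : i = ((i - mN y) + mN y)%N by rewrite subnK.
  by rewrite hrepN // e2 hrepN.
pose G (q : Defs.fpath V E * nat) := expR (beta * (N%:R - q.2%:R)).
have e1 : \sum_(y <- ys) lx R x y `^ beta = \sum_(q <- map pp ys) G q.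
  by rewrite big_map; apply: eq_big_seq => y yin; rewrite hw.
pose nus := undup (map nu ys).
pose Q := [seq (a, k) | a <- nus, k <- iota 0 (size a.2).+1].
have uQ : uniq Q.
  apply: allpairs_uniq_dep; first exact: undup_uniq.
    by move=> a _; apply: iota_uniq.
  by move=> [a k] [a' k'] _ _ /= [ea ek]; subst.
have subQ : {subset map pp ys <= Q}.
  move=> _ /mapP [y yin ->]; rewrite /pp.
  rewrite /Q; apply: (@allpairs_f_dep _ (fun _ => nat : eqType) _ (fun a k => (a, k)) nus (fun a => iota 0 (size a.2).+1)).
    by rewrite mem_undup; apply: map_f.
  have [_ [_ [_ [pre hpre]]]] := hnu y yin.
  by rewrite mem_iota /= add0n ltnS hpre size_cat size_map size_iota leq_addl.
have hC0 : 0 <= (1 - expR beta)^-1.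
  by rewrite invr_ge0 subr_ge0 ltW // expR_lt1.
have uM : uniq (map pp ys) by rewrite map_inj_in_uniq.
rewrite e1; apply: (le_trans (le_sub_seq uM uQ subQ (fun q => expR_ge0 _))).
rewrite big_allpairs_dep /=.
apply: (le_trans (ler_sum _ (fun a _ => geom_bound N (size a.2) hbeta))).
rewrite -mulr_sumr ler_wpM2l //.
have hsub : [set` nus] `<=` SP N.
  move=> a /=; rewrite mem_undup => /mapP [y yin ->].
  by have [h1 [h2 [h3' _]]] := hnu y yin.
rewrite -lee_fin -sumEFin (le_trans _ (hL N)) // ssE.
apply: esum_ge; exists [set` nus]; first by split => //; apply: finite_seq.
by rewrite -fsbig_seq ?undup_uniq.
Qed.

End Main.


Unset Implicit Arguments.

Theorem theorem7p6 (R : realType) (V E : countType) (s r : E -> V)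
  (xE : nat -> E)
  (hx : inf_path s r xE)
  (h1 : is_source r (s (xE 0%N)))
  (h2 : forall v, Vx s r xE v ->
          finite_set [set e | s e = v /\ edges_in s r (Vx s r xE) e])
  (h3 : no_nontrivial_cycles s r (Vx s r xE))
  (h4 : finite_set (Vx s r xE `\` Wx s xE))
  (beta : R) (hbeta : beta < 0) :
  beta_summable s r xE beta <-> (limn (source_sum s r xE beta) < +oo)%E.
Proof.
have nd : nondecreasing_seq (source_sum s r xE beta).
  by apply/nondecreasing_seqP => n; apply: f_step.
have hlim : limn (source_sum s r xE beta) = ereal_sup (range (source_sum s r xE beta)).
  exact: (cvg_lim (@ereal_hausdorff R) (ereal_nondecreasing_cvgn nd)).
rewrite hlim; split.
  case=> _ hT; apply: le_lt_trans hT.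
  by apply: ge_ereal_sup => _ [n _ <-]; apply: f_le_T.
move=> hF; split; first exact: x_np hx h3.
have hF0 : (0 <= ereal_sup (range (source_sum s r xE beta)))%E.
  apply: le_trans (ereal_sup_ubound (ex_intro2 _ _ 0%N I erefl)).
  by apply: esum_ge0 => mu _; apply: expR_ge0.
set F := ereal_sup _ in hF hF0.
have Ffin : F \is a fin_num by rewrite ge0_fin_numE.
have hL : forall N, (source_sum s r xE beta N <= (fine F)%:E)%E.
  by move=> N; rewrite fineK //; apply: ereal_sup_ubound; exists N.
apply: (@le_lt_trans _ _ (((1 - expR beta)^-1 * fine F)%:E)); last exact: ltry.
apply: ge_ereal_sup => _ [X [finX Xorb] <-].
rewrite fsbig_finite //= sumEFin lee_fin.
apply: (core hx h3 h4 hbeta hL).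
  exact: finmap.fset_uniq.
move=> y yin; apply: Xorb; move: yin.
by rewrite in_fset_set // inE.
Qed.
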